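(* (A weighted, repeated argument sum simplification.) For complex numbers $x_0,\dots,x_q$ (repetitions allowed), $q\ge0$, and $\tau\in\mathbb{R}$, $$\sum_{j=0}^q x_j\,e^{-\tau[x_0,\ldots,x_q,x_j]}=\Big(\tau\frac{\partial}{\partial\tau}-q\Big)e^{-\tau[x_0,\ldots,x_q]}.$$
   Context: For $t\in\mathbb{R}$ and numbers $y_0,\dots,y_p$ (repetitions allowed), $e^{t[y_0,\ldots,y_p]}$ denotes the divided difference of $f(x)=e^{tx}$, $f[y_0,\ldots,y_p]=\frac{1}{2\pi i}\oint_\Gamma\frac{f(x)}{\prod_{i=0}^p(x-y_i)}\,\mathrm{d}x$, $\Gamma$ a positively oriented contour enclosing all $y_i$. The multiset $[x_0,\ldots,x_q,x_j]$ contains $x_j$ twice. *)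

(* Defs.v *)
From Stdlib Require Import Reals List.
From Coquelicot Require Import Coquelicot.
Open Scope R_scope.

Definition cexp (z : C) : C :=
  (exp (Re z) * cos (Im z), exp (Re z) * sin (Im z)).

Definition node_poly (ys : list C) (x : C) : C :=
  fold_right (fun y acc => Cmult (Cminus x y) acc) (RtoC 1) ys.

(* Radius of the circular contour: strictly larger than every |y_i|. *)
Definition dd_radius (ys : list C) : R :=
  1 + fold_right (fun y acc => Cmod y + acc) 0 ys.

Definition circ (r th : R) : C := (r * cos th, r * sin th).

(* Divided difference via the contour integral
     f[y_0,...,y_p] = 1/(2 pi i) \oint_Gamma f(x) / prod_i (x - y_i) dx
   with Gamma the circle |x| = dd_radius ys (which encloses all nodes).
   Parametrizing x = gamma(th), dx = i gamma(th) dth, the factor i cancels: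
     f[ys] = 1/(2 pi) \int_0^{2 pi} f(gamma th) gamma(th) / prod(gamma th - y_i) dth. *)
Definition divdiff (f : C -> C) (ys : list C) : C :=
  let r := dd_radius ys in
  Cmult (RtoC (/ (2 * PI)))
    (@RInt C_R_CompleteNormedModule
       (fun th => Cdiv (Cmult (f (circ r th)) (circ r th))
                       (node_poly ys (circ r th)))
       0 (2 * PI)).

Definition exp_dd (t : R) (ys : list C) : C :=
  divdiff (fun x => cexp (Cmult (RtoC t) x)) ys.

(* Main.v *)
Require Import Defs.
From Stdlib Require Import Reals List Lra Lia Ring Field.
From Coquelicot Require Import Coquelicot.
Open Scope R_scope.

Definition cdr (f : R -> C) (t : R) (l : C) :=
  @is_derive R_AbsRing C_R_NormedModule f t l.

Lemma cdr_split (f : R -> C) t l :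
  cdr f t l <-> is_derive (fun s => Re (f s)) t (Re l) /\ is_derive (fun s => Im (f s)) t (Im l).
Proof.
  split.
  - intros H. split.
    + unfold is_derive.
      eapply filterdiff_ext_lin.
      apply (@filterdiff_comp' R_AbsRing R_NormedModule C_R_NormedModule R_NormedModule f (fun c : C_R_NormedModule => fst c) t _ (fun c : C_R_NormedModule => fst c) H).
      apply filterdiff_linear. apply (@is_linear_fst R_AbsRing R_NormedModule R_NormedModule).
      intros y. reflexivity.
    + unfold is_derive.
      eapply filterdiff_ext_lin.
      apply (@filterdiff_comp' R_AbsRing R_NormedModule C_R_NormedModule R_NormedModule f (fun c : C_R_NormedModule => snd c) t _ (fun c : C_R_NormedModule => snd c) H).
      apply filterdiff_linear. apply (@is_linear_snd R_AbsRing R_NormedModule R_NormedModule).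
      intros y. reflexivity.
  - intros [H1 H2].
    unfold cdr, is_derive.
    assert (Hp := @filterdiff_comp'_2 R_AbsRing R_NormedModule R_NormedModule R_NormedModule C_R_NormedModule
      (fun s => Re (f s)) (fun s => Im (f s))
      (fun a b => (a, b)) t _ _ (fun a b => (a,b)) H1 H2).
    eapply filterdiff_ext; [| eapply filterdiff_ext_lin; [apply Hp|]].
    + intros y. simpl. destruct (f y); reflexivity.
    + apply filterdiff_linear.
      apply (is_linear_prod (K:=R_AbsRing) (T:=prod_NormedModule R_AbsRing R_NormedModule R_NormedModule)
        (fun t => fst t) (fun t => snd t)); [apply is_linear_fst | apply is_linear_snd].
    + intros y. simpl. destruct l; reflexivity.
Qed.

Lemma rd_val (f : R -> R) t l l' : is_derive f t l -> l = l' -> is_derive f t l'.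
Proof. intros H ->; exact H. Qed.

Lemma rd_mult (f g : R -> R) t a b : is_derive f t a -> is_derive g t b ->
  is_derive (fun s => f s * g s) t (a * g t + f t * b).
Proof.
  intros Ha Hb. eapply rd_val. apply (is_derive_mult f g t a b Ha Hb).
  intros; apply Rmult_comm. reflexivity.
Qed.

Lemma rd_plus (f g : R -> R) t a b : is_derive f t a -> is_derive g t b ->
  is_derive (fun s => f s + g s) t (a + b).
Proof. intros Ha Hb. apply (is_derive_plus f g t a b Ha Hb). Qed.

Lemma rd_opp (f : R -> R) t a : is_derive f t a -> is_derive (fun s => - f s) t (- a).
Proof. intros Ha. apply (is_derive_opp f t a Ha). Qed.

Lemma rd_minus (f g : R -> R) t a b : is_derive f t a -> is_derive g t b ->
  is_derive (fun s => f s - g s) t (a - b).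
Proof. intros Ha Hb. apply (is_derive_minus f g t a b Ha Hb). Qed.

Lemma rd_const (c t : R) : is_derive (fun _ => c) t 0.
Proof. apply (is_derive_const c t). Qed.

Lemma rd_id (t : R) : is_derive (fun s => s) t 1.
Proof. apply (is_derive_id t). Qed.

Lemma rd_inv (f : R -> R) t a : is_derive f t a -> f t <> 0 ->
  is_derive (fun s => / f s) t (- a / (f t)^2).
Proof. intros; apply is_derive_inv; auto. Qed.

Lemma rd_exp (f : R -> R) t a : is_derive f t a -> is_derive (fun s => exp (f s)) t (a * exp (f t)).
Proof.
  intros H. apply (is_derive_comp exp f t (exp (f t)) a).
  apply is_derive_Reals, derivable_pt_lim_exp. exact H.
Qed.

Lemma rd_cos (f : R -> R) t a : is_derive f t a -> is_derive (fun s => cos (f s)) t (a * - sin (f t)).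
Proof.
  intros H. apply (is_derive_comp cos f t (- sin (f t)) a).
  apply is_derive_Reals, derivable_pt_lim_cos. exact H.
Qed.

Lemma rd_sin (f : R -> R) t a : is_derive f t a -> is_derive (fun s => sin (f s)) t (a * cos (f t)).
Proof.
  intros H. apply (is_derive_comp sin f t (cos (f t)) a).
  apply is_derive_Reals, derivable_pt_lim_sin. exact H.
Qed.

Lemma cdr_val f t l l' : cdr f t l -> l = l' -> cdr f t l'.
Proof. intros H ->; exact H. Qed.

Lemma cdr_plus f g t a b : cdr f t a -> cdr g t b -> cdr (fun s => Cplus (f s) (g s)) t (Cplus a b).
Proof.
  rewrite !cdr_split. intros [H1 H2] [H3 H4]. split; simpl.
  - apply rd_plus; auto.
  - apply rd_plus; auto.
Qed.

Lemma cdr_opp f t a : cdr f t a -> cdr (fun s => Copp (f s)) t (Copp a).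
Proof.
  rewrite !cdr_split. intros [H1 H2]. split; simpl; apply rd_opp; auto.
Qed.

Lemma cdr_mult f g t a b : cdr f t a -> cdr g t b ->
  cdr (fun s => Cmult (f s) (g s)) t (Cplus (Cmult a (g t)) (Cmult (f t) b)).
Proof.
  rewrite !cdr_split. intros [H1 H2] [H3 H4]. split; simpl.
  - eapply rd_val. apply rd_minus; apply rd_mult; eauto. simpl. unfold Re, Im. ring.
  - eapply rd_val. apply rd_plus; apply rd_mult; eauto. simpl. unfold Re, Im. ring.
Qed.

Lemma cdr_const (c : C) t : cdr (fun _ => c) t (RtoC 0).
Proof. rewrite cdr_split. split; apply rd_const. Qed.

Lemma cdr_RtoC (f : R -> R) t a : is_derive f t a -> cdr (fun s => RtoC (f s)) t (RtoC a).
Proof. intros H. rewrite cdr_split. split; simpl; auto. apply rd_const. Qed.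

Lemma cdr_inv f t a : cdr f t a -> f t <> RtoC 0 ->
  cdr (fun s => Cinv (f s)) t (Copp (Cmult a (Cinv (Cmult (f t) (f t))))).
Proof.
  rewrite !cdr_split. unfold Re, Im. intros [H1 H2] Hnz.
  assert (Hn : fst (f t) * fst (f t) + snd (f t) * snd (f t) <> 0).
  { intros E. apply Hnz. destruct (f t) as [u v]; simpl in *.
    assert (u = 0) by nra. assert (v = 0) by nra. subst; reflexivity. }
  assert (HN : is_derive (fun s => / (fst (f s) * fst (f s) + snd (f s) * snd (f s))) t
     (- (fst a * fst (f t) + fst (f t) * fst a + (snd a * snd (f t) + snd (f t) * snd a))
       / (fst (f t) * fst (f t) + snd (f t) * snd (f t))^2)).
  { apply (rd_inv (fun s => fst (f s) * fst (f s) + snd (f s) * snd (f s))); auto. apply (rd_plus (fun s => fst (f s) * fst (f s)) (fun s => snd (f s) * snd (f s))); apply (rd_mult (fun s => _ (f s))); auto. }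
  split.
  - apply (is_derive_ext (fun s => fst (f s) * / (fst (f s) * fst (f s) + snd (f s) * snd (f s)))).
    intros s. simpl. unfold Rdiv. rewrite !Rmult_1_r. reflexivity.
    eapply rd_val. apply (rd_mult (fun s => fst (f s))). exact H1. exact HN.
    remember (f t) as w eqn:Ew. destruct w as [u v]. destruct a as [p q]. simpl in *.
    assert (Hm : (u * u - v * v) * ((u * u - v * v) * 1) + (u * v + v * u) * ((u * v + v * u) * 1) <> 0).
    { replace ((u * u - v * v) * ((u * u - v * v) * 1) + (u * v + v * u) * ((u * v + v * u) * 1))
       with ((u*u+v*v)*(u*u+v*v)) by ring. apply Rmult_integral_contrapositive; auto. }
    replace (fst (f t)) with u by (rewrite <- Ew; reflexivity).
    replace (snd (f t)) with v by (rewrite <- Ew; reflexivity).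
    field. rewrite !Rmult_1_r in Hm. split; assumption.
  - apply (is_derive_ext (fun s => - snd (f s) * / (fst (f s) * fst (f s) + snd (f s) * snd (f s)))).
    intros s. simpl. unfold Rdiv. rewrite !Rmult_1_r. reflexivity.
    eapply rd_val. apply (rd_mult (fun s => - snd (f s))). apply rd_opp. exact H2. exact HN.
    remember (f t) as w eqn:Ew. destruct w as [u v]. destruct a as [p q]. simpl in *.
    assert (Hm : (u * u - v * v) * ((u * u - v * v) * 1) + (u * v + v * u) * ((u * v + v * u) * 1) <> 0).
    { replace ((u * u - v * v) * ((u * u - v * v) * 1) + (u * v + v * u) * ((u * v + v * u) * 1))
       with ((u*u+v*v)*(u*u+v*v)) by ring. apply Rmult_integral_contrapositive; auto. }
    replace (fst (f t)) with u by (rewrite <- Ew; reflexivity).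
    replace (snd (f t)) with v by (rewrite <- Ew; reflexivity).
    field. rewrite !Rmult_1_r in Hm. split; assumption.
Qed.
Ltac rring := cbv beta; match goal with |- ?a = ?b => change (@eq R a b) end; ring.

Lemma cdr_cexp p t a : cdr p t a -> cdr (fun s => cexp (p s)) t (Cmult a (cexp (p t))).
Proof.
  rewrite !cdr_split. unfold cexp. unfold Re, Im. intros [H1 H2]. simpl. split.
  - eapply rd_val. apply (rd_mult (fun s => exp (fst (p s)))). apply rd_exp; exact H1.
    apply rd_cos; exact H2. cbv beta. match goal with |- ?a = ?b => change (@eq R a b) end. ring.
  - eapply rd_val. apply (rd_mult (fun s => exp (fst (p s)))). apply rd_exp; exact H1.
    apply rd_sin; exact H2. cbv beta. match goal with |- ?a = ?b => change (@eq R a b) end. ring.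
Qed.

Definition cont2 (P : R -> R -> C) (x y : R) :=
  continuity_2d_pt (fun u v => fst (P u v)) x y /\ continuity_2d_pt (fun u v => snd (P u v)) x y.

Lemma cont2_const c x y : cont2 (fun _ _ => c) x y.
Proof. split; apply continuity_2d_pt_const. Qed.

Lemma cont2_RtoC (f : R -> R -> R) x y : continuity_2d_pt f x y -> cont2 (fun u v => RtoC (f u v)) x y.
Proof. intros H; split; simpl; auto. apply continuity_2d_pt_const. Qed.

Lemma cont2_plus P Q x y : cont2 P x y -> cont2 Q x y -> cont2 (fun u v => Cplus (P u v) (Q u v)) x y.
Proof. intros [H1 H2] [H3 H4]; split; simpl; apply continuity_2d_pt_plus; auto. Qed.

Lemma cont2_opp P x y : cont2 P x y -> cont2 (fun u v => Copp (P u v)) x y.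
Proof. intros [H1 H2]; split; simpl; apply continuity_2d_pt_opp; auto. Qed.

Lemma cont2_mult P Q x y : cont2 P x y -> cont2 Q x y -> cont2 (fun u v => Cmult (P u v) (Q u v)) x y.
Proof.
  intros [H1 H2] [H3 H4]; split; simpl.
  - apply continuity_2d_pt_minus; apply continuity_2d_pt_mult; auto.
  - apply continuity_2d_pt_plus; apply continuity_2d_pt_mult; auto.
Qed.

Lemma cont2_inv P x y : cont2 P x y -> P x y <> RtoC 0 -> cont2 (fun u v => Cinv (P u v)) x y.
Proof.
  intros [H1 H2] Hnz.
  assert (Hn : fst (P x y) ^ 2 + snd (P x y) ^ 2 <> 0).
  { intros E. apply Hnz. destruct (P x y) as [u v]; simpl in *.
    assert (u = 0) by nra. assert (v = 0) by nra. subst; reflexivity. }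
  assert (HN : continuity_2d_pt (fun u v => / (fst (P u v) ^ 2 + snd (P u v) ^ 2)) x y).
  { apply continuity_2d_pt_inv; auto.
    apply continuity_2d_pt_plus; simpl; apply continuity_2d_pt_mult; auto;
    apply continuity_2d_pt_mult; auto; apply continuity_2d_pt_const. }
  split; simpl; unfold Rdiv.
  - apply continuity_2d_pt_mult; auto.
  - apply continuity_2d_pt_mult; auto. apply continuity_2d_pt_opp; auto.
Qed.

Lemma cont2_cexp P x y : cont2 P x y -> cont2 (fun u v => cexp (P u v)) x y.
Proof.
  intros [H1 H2]; split; simpl.
  - apply continuity_2d_pt_mult.
    apply (continuity_1d_2d_pt_comp exp (fun u v => fst (P u v))); auto. apply derivable_continuous_pt, derivable_pt_exp.
    apply (continuity_1d_2d_pt_comp cos (fun u v => snd (P u v))); auto. apply derivable_continuous_pt, derivable_pt_cos.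
  - apply continuity_2d_pt_mult.
    apply (continuity_1d_2d_pt_comp exp (fun u v => fst (P u v))); auto. apply derivable_continuous_pt, derivable_pt_exp.
    apply (continuity_1d_2d_pt_comp sin (fun u v => snd (P u v))); auto. apply derivable_continuous_pt, derivable_pt_sin.
Qed.

Ltac cring := cbv beta; match goal with |- ?a = ?b => change (@eq C a b) end; ring.
Ltac cfield := cbv beta; match goal with |- ?a = ?b => change (@eq C a b) end; field.

Definition Hol (U : C -> Prop) (F F' : C -> C) :=
  (forall p t a, U (p t) -> cdr p t a -> cdr (fun s => F (p s)) t (Cmult a (F' (p t)))) /\
  (forall P x y, U (P x y) -> cont2 P x y ->
      cont2 (fun u v => F (P u v)) x y /\ cont2 (fun u v => F' (P u v)) x y).

Lemma Hol_id U : Hol U (fun z => z) (fun _ => RtoC 1).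
Proof.
  split.
  - intros p t a _ H. eapply cdr_val. exact H. cring.
  - intros P x y _ H. split; auto. apply cont2_const.
Qed.

Lemma Hol_const U c : Hol U (fun _ => c) (fun _ => RtoC 0).
Proof.
  split.
  - intros p t a _ H. eapply cdr_val. apply cdr_const. cring.
  - intros P x y _ H. split; apply cont2_const.
Qed.

Lemma Hol_plus U F F' G G' : Hol U F F' -> Hol U G G' ->
  Hol U (fun z => Cplus (F z) (G z)) (fun z => Cplus (F' z) (G' z)).
Proof.
  intros [HF1 HF2] [HG1 HG2]. split.
  - intros p t a Hu H. eapply cdr_val. apply cdr_plus; [apply HF1|apply HG1]; eauto. cring.
  - intros P x y Hu H. destruct (HF2 P x y Hu H), (HG2 P x y Hu H).
    split; apply cont2_plus; auto.
Qed.

Lemma Hol_mult U F F' G G' : Hol U F F' -> Hol U G G' ->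
  Hol U (fun z => Cmult (F z) (G z)) (fun z => Cplus (Cmult (F' z) (G z)) (Cmult (F z) (G' z))).
Proof.
  intros [HF1 HF2] [HG1 HG2]. split.
  - intros p t a Hu H. eapply cdr_val. apply cdr_mult; [apply HF1|apply HG1]; eauto. cring.
  - intros P x y Hu H. destruct (HF2 P x y Hu H), (HG2 P x y Hu H).
    split. apply cont2_mult; auto. apply cont2_plus; apply cont2_mult; auto.
Qed.

Lemma Hol_inv U F F' : Hol U F F' -> (forall z, U z -> F z <> RtoC 0) ->
  Hol U (fun z => Cinv (F z)) (fun z => Copp (Cmult (F' z) (Cinv (Cmult (F z) (F z))))).
Proof.
  intros [HF1 HF2] Hnz. split.
  - intros p t a Hu H. eapply cdr_val. apply cdr_inv. apply HF1; eauto. apply Hnz; auto. cring.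
  - intros P x y Hu H. destruct (HF2 P x y Hu H).
    split. { apply cont2_inv; auto. }
    apply cont2_opp, cont2_mult; auto. apply cont2_inv. apply cont2_mult; auto.
    apply Cmult_neq_0; apply Hnz; auto.
Qed.

Lemma Hol_comp U V G G' F F' : Hol U G G' -> Hol V F F' -> (forall z, U z -> V (G z)) ->
  Hol U (fun z => F (G z)) (fun z => Cmult (G' z) (F' (G z))).
Proof.
  intros [HG1 HG2] [HF1 HF2] HUV. split.
  - intros p t a Hu H. eapply cdr_val. apply (HF1 (fun s => G (p s))). apply HUV; auto.
    apply HG1; eauto. cring.
  - intros P x y Hu H. destruct (HG2 P x y Hu H) as [C1 C2].
    destruct (HF2 (fun u v => G (P u v)) x y (HUV _ Hu) C1).
    split; auto. apply cont2_mult; auto.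
Qed.

Lemma Hol_cexp U : Hol U cexp cexp.
Proof.
  split.
  - intros p t a _ H. apply cdr_cexp; auto.
  - intros P x y _ H. split; apply cont2_cexp; auto.
Qed.

Lemma cont1_of_2d (f : R -> R -> R) r t : continuity_2d_pt f r t -> continuity_pt (fun v => f r v) t.
Proof.
  intros H. apply continuity_pt_filterlim.
  intros P [eps HP]. destruct (H eps) as [d Hd].
  exists d. intros v Hv. apply HP. apply Hd. rewrite Rminus_eq_0, Rabs_R0. apply cond_pos. exact Hv.
Qed.

Lemma contC (g : R -> C) t :
  continuity_pt (fun v => fst (g v)) t -> continuity_pt (fun v => snd (g v)) t ->
  @continuous R_UniformSpace C_UniformSpace g t.
Proof.
  intros H1 H2. apply continuity_pt_filterlim in H1. apply continuity_pt_filterlim in H2.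
  assert (Hc := @continuous_comp_2 R_UniformSpace R_UniformSpace R_UniformSpace
     (prod_UniformSpace R_UniformSpace R_UniformSpace)
     (fun v => fst (g v)) (fun v => snd (g v)) (fun a b => (a, b)) t H1 H2).
  assert (Hid : continuous (fun x0 : R * R => (fst x0, snd x0)) (fst (g t), snd (g t))).
  { apply (filterlim_ext (fun x => x)). intros [a b]; reflexivity. apply filterlim_id. }
  specialize (Hc Hid).
  eapply filterlim_ext. 2: { unfold continuous in Hc. 
   replace (g t) with (fst (g t), snd (g t)) by (destruct (g t); reflexivity). exact Hc. }
  intros v. simpl. destruct (g v); reflexivity.
Qed.

Lemma contC_of_cont2 (g : R -> C) P r t : cont2 P r t -> (forall v, g v = P r v) ->
  @continuous R_UniformSpace C_UniformSpace g t.
Proof.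
  intros [H1 H2] Hg. apply contC.
  - eapply continuity_pt_ext. intros v. rewrite Hg. reflexivity.
    apply (cont1_of_2d (fun u v => fst (P u v))). exact H1.
  - eapply continuity_pt_ext. intros v. rewrite Hg. reflexivity.
    apply (cont1_of_2d (fun u v => snd (P u v))). exact H2.
Qed.

Lemma exRInt_of_cont2 (g : R -> C) P r a b : (forall t, Rmin a b <= t <= Rmax a b -> cont2 P r t) ->
  (forall v, g v = P r v) -> @ex_RInt C_R_NormedModule g a b.
Proof.
  intros H Hg. apply (@ex_RInt_continuous C_R_CompleteNormedModule).
  intros z Hz. eapply contC_of_cont2; eauto.
Qed.

Lemma RInt_C_split (g : R -> C) a b : @ex_RInt C_R_NormedModule g a b ->
  @RInt C_R_CompleteNormedModule g a b =
  (RInt (fun t => fst (g t)) a b, RInt (fun t => snd (g t)) a b).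
Proof.
  intros H. apply (@RInt_correct C_R_CompleteNormedModule) in H.
  set (I := @RInt C_R_CompleteNormedModule g a b) in *.
  assert (H1 := @is_RInt_fct_extend_fst R_NormedModule R_NormedModule g a b I H).
  assert (H2 := @is_RInt_fct_extend_snd R_NormedModule R_NormedModule g a b I H).
  apply (@is_RInt_unique R_CompleteNormedModule) in H1. apply (@is_RInt_unique R_CompleteNormedModule) in H2.
  destruct I as [i1 i2]. simpl in *. f_equal; symmetry; assumption.
Qed.

Lemma exRInt_fst (g : R -> C) a b : @ex_RInt C_R_NormedModule g a b -> ex_RInt (fun t => fst (g t)) a b.
Proof. intros [l H]. exists (fst l). apply (@is_RInt_fct_extend_fst R_NormedModule R_NormedModule g a b l H). Qed.
Lemma exRInt_snd (g : R -> C) a b : @ex_RInt C_R_NormedModule g a b -> ex_RInt (fun t => snd (g t)) a b.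
Proof. intros [l H]. exists (snd l). apply (@is_RInt_fct_extend_snd R_NormedModule R_NormedModule g a b l H). Qed.

Lemma param_C (f df : R -> R -> C) a b x d :
  0 < d ->
  (forall u t, Rabs (u - x) < d -> cdr (fun u => f u t) u (df u t)) ->
  (forall t, Rmin a b <= t <= Rmax a b -> cont2 df x t) ->
  (forall u t, Rabs (u - x) < d -> Rmin a b <= t <= Rmax a b -> cont2 f u t) ->
  cdr (fun u => @RInt C_R_CompleteNormedModule (f u) a b) x (@RInt C_R_CompleteNormedModule (df x) a b).
Proof.
  intros Hd Hder Hcd Hcf.
  assert (exf : forall u, Rabs (u - x) < d -> @ex_RInt C_R_NormedModule (f u) a b).
  { intros u Hu. eapply exRInt_of_cont2. intros t Ht. apply (Hcf u t Hu Ht). intros v; reflexivity. }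
  assert (exdf : @ex_RInt C_R_NormedModule (df x) a b).
  { eapply exRInt_of_cont2. intros t Ht. apply (Hcd t Ht). intros v; reflexivity. }
  rewrite cdr_split. rewrite (RInt_C_split _ _ _ exdf). unfold Re, Im.
  split.
  - apply (is_derive_ext_loc (fun u => RInt (fun t => fst (f u t)) a b)).
    { exists (mkposreal d Hd). intros y Hy. rewrite (RInt_C_split _ _ _ (exf y Hy)). reflexivity. }
    eapply rd_val. apply is_derive_RInt_param.
    + exists (mkposreal d Hd). intros y Hy t _. exists (fst (df y t)).
      destruct (proj1 (cdr_split _ _ _) (Hder y t Hy)) as [H1 _]. exact H1.
    + intros t Ht. apply (continuity_2d_pt_ext_loc (fun u v => fst (df u v))).
      exists (mkposreal d Hd). intros u v Hu _. symmetry. apply is_derive_unique.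
      destruct (proj1 (cdr_split _ _ _) (Hder u v Hu)) as [H1 _]. exact H1.
      apply (Hcd t Ht).
    + exists (mkposreal d Hd). intros y Hy. apply exRInt_fst. apply exf. exact Hy.
    + apply RInt_ext. intros t _. apply is_derive_unique.
      destruct (proj1 (cdr_split _ _ _) (Hder x t ltac:(rewrite Rminus_eq_0, Rabs_R0; exact Hd))) as [H1 _]. exact H1.
  - apply (is_derive_ext_loc (fun u => RInt (fun t => snd (f u t)) a b)).
    { exists (mkposreal d Hd). intros y Hy. rewrite (RInt_C_split _ _ _ (exf y Hy)). reflexivity. }
    eapply rd_val. apply is_derive_RInt_param.
    + exists (mkposreal d Hd). intros y Hy t _. exists (snd (df y t)).
      destruct (proj1 (cdr_split _ _ _) (Hder y t Hy)) as [_ H1]. exact H1.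
    + intros t Ht. apply (continuity_2d_pt_ext_loc (fun u v => snd (df u v))).
      exists (mkposreal d Hd). intros u v Hu _. symmetry. apply is_derive_unique.
      destruct (proj1 (cdr_split _ _ _) (Hder u v Hu)) as [_ H1]. exact H1.
      apply (Hcd t Ht).
    + exists (mkposreal d Hd). intros y Hy. apply exRInt_snd. apply exf. exact Hy.
    + apply RInt_ext. intros t _. apply is_derive_unique.
      destruct (proj1 (cdr_split _ _ _) (Hder x t ltac:(rewrite Rminus_eq_0, Rabs_R0; exact Hd))) as [_ H1]. exact H1.
Qed.

Lemma is_RInt_Cmult (c : C) (g : R -> C) a b l :
  @is_RInt C_R_NormedModule g a b l -> @is_RInt C_R_NormedModule (fun t => Cmult c (g t)) a b (Cmult c l).
Proof.
  intros H.
  assert (H1 := @is_RInt_fct_extend_fst R_NormedModule R_NormedModule g a b l H).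
  assert (H2 := @is_RInt_fct_extend_snd R_NormedModule R_NormedModule g a b l H).
  apply (@is_RInt_fct_extend_pair R_NormedModule R_NormedModule (fun t => Cmult c (g t))).
  - eapply (@is_RInt_ext R_NormedModule (fun t => minus (scal (fst c) (fst (g t))) (scal (snd c) (snd (g t))))).
    intros t _. reflexivity.
    apply (@is_RInt_minus R_NormedModule); apply (@is_RInt_scal R_NormedModule); assumption.
  - eapply (@is_RInt_ext R_NormedModule (fun t => plus (scal (fst c) (snd (g t))) (scal (snd c) (fst (g t))))).
    intros t _. reflexivity.
    apply (@is_RInt_plus R_NormedModule); apply (@is_RInt_scal R_NormedModule); assumption.
Qed.

Lemma RInt_Cmult (c : C) (g : R -> C) a b : @ex_RInt C_R_NormedModule g a b ->
  @RInt C_R_CompleteNormedModule (fun t => Cmult c (g t)) a b = Cmult c (@RInt C_R_CompleteNormedModule g a b).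
Proof.
  intros H. apply (@is_RInt_unique C_R_CompleteNormedModule). apply is_RInt_Cmult.
  apply (@RInt_correct C_R_CompleteNormedModule). exact H.
Qed.

Lemma cdr_circ_th r th : cdr (fun s => circ r s) th (Cmult Ci (circ r th)).
Proof.
  rewrite cdr_split. unfold circ, Re, Im, Ci; simpl. split.
  - eapply rd_val. apply (rd_mult (fun _ => r)). apply rd_const. apply rd_cos, rd_id. rring.
  - eapply rd_val. apply (rd_mult (fun _ => r)). apply rd_const. apply rd_sin, rd_id. rring.
Qed.

Lemma cdr_circ_r r th : cdr (fun s => circ s th) r (circ 1 th).
Proof.
  rewrite cdr_split. unfold circ, Re, Im; simpl. split.
  - eapply rd_val. apply (rd_mult (fun s => s) (fun _ => cos th)). apply rd_id. apply rd_const. rring.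
  - eapply rd_val. apply (rd_mult (fun s => s) (fun _ => sin th)). apply rd_id. apply rd_const. rring.
Qed.

Lemma cont2_circ (R1 R2 : R -> R -> R) x y : continuity_2d_pt R1 x y -> continuity_2d_pt R2 x y ->
  cont2 (fun u v => circ (R1 u v) (R2 u v)) x y.
Proof.
  intros H1 H2. split; simpl; apply continuity_2d_pt_mult; auto.
  apply (continuity_1d_2d_pt_comp cos R2); auto. apply derivable_continuous_pt, derivable_pt_cos.
  apply (continuity_1d_2d_pt_comp sin R2); auto. apply derivable_continuous_pt, derivable_pt_sin.
Qed.

Lemma circ_2PI r : circ r (2 * PI) = circ r 0.
Proof. unfold circ. rewrite cos_2PI, sin_2PI, cos_0, sin_0. reflexivity. Qed.

Lemma FTC_circ U K K' r : Hol U K K' -> (forall th, U (circ r th)) ->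
  @RInt C_R_CompleteNormedModule (fun th => Cmult (Cmult Ci (circ r th)) (K' (circ r th))) 0 (2*PI) = RtoC 0.
Proof.
  intros [H1 H2] HU.
  apply (@is_RInt_unique C_R_CompleteNormedModule).
  assert (E : RtoC 0 = @minus C_R_NormedModule (K (circ r (2*PI))) (K (circ r 0))).
  { rewrite circ_2PI. unfold minus, plus, opp; simpl. unfold RtoC, prod_plus, prod_opp. destruct (K (circ r 0)). simpl. unfold plus, opp. simpl. f_equal; rring. }
  rewrite E.
  apply (@is_RInt_derive C_R_CompleteNormedModule (fun th => K (circ r th))).
  - intros th _. apply (H1 (fun s => circ r s)). apply HU. apply cdr_circ_th.
  - intros th _.
    assert (Hc : cont2 (fun u v => circ r v) 0 th).
    { apply (cont2_circ (fun _ _ => r) (fun u v => v)). apply continuity_2d_pt_const. apply continuity_2d_pt_id2. }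
    destruct (H2 _ 0 th (HU th) Hc) as [_ Hk].
    eapply (contC_of_cont2 _ (fun u v => Cmult (Cmult Ci (circ r v)) (K' (circ r v))) 0 th).
    apply cont2_mult; auto. apply cont2_mult; auto. apply cont2_const.
    intros v; reflexivity.
Qed.

Lemma Hol_cont_circ U K K' r th : Hol U K K' -> U (circ r th) ->
  cont2 (fun u v => K (circ u v)) r th /\ cont2 (fun u v => K' (circ u v)) r th.
Proof.
  intros [_ H2] Hu. apply H2; auto.
  apply (cont2_circ (fun u v => u) (fun u v => v)). apply continuity_2d_pt_id1. apply continuity_2d_pt_id2.
Qed.

Lemma cont2_circ_std r th : cont2 (fun u v => circ u v) r th.
Proof.
  apply (cont2_circ (fun u v => u) (fun u v => v)). apply continuity_2d_pt_id1. apply continuity_2d_pt_id2.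
Qed.

Lemma cont2_circ1 r th : cont2 (fun u v => circ 1 v) r th.
Proof.
  apply (cont2_circ (fun u v => 1) (fun u v => v)). apply continuity_2d_pt_const. apply continuity_2d_pt_id2.
Qed.

Lemma radius_indep U K K' m r1 r2 : 0 <= m -> Hol U K K' -> (forall r th, m < r -> U (circ r th)) ->
  m < r1 -> m < r2 ->
  @RInt C_R_CompleteNormedModule (fun th => K (circ r1 th)) 0 (2*PI) =
  @RInt C_R_CompleteNormedModule (fun th => K (circ r2 th)) 0 (2*PI).
Proof.
  intros Hm HK HU.
  assert (Hder : forall t, m < t -> cdr (fun u => @RInt C_R_CompleteNormedModule (fun th => K (circ u th)) 0 (2*PI)) t (RtoC 0)).
  { intros t Ht.
    eapply cdr_val.
    apply (param_C (fun u th => K (circ u th)) (fun u th => Cmult (circ 1 th) (K' (circ u th))) 0 (2*PI) t (t - m)).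
    - lra.
    - intros u th Hu. apply (proj1 HK (fun s => circ s th)).
      apply HU. apply Rabs_def2 in Hu. lra. apply cdr_circ_r.
    - intros th _. apply cont2_mult. apply cont2_circ1. apply (Hol_cont_circ U K K'); auto.
    - intros u th Hu _. apply (Hol_cont_circ U K K'); auto. apply HU. apply Rabs_def2 in Hu. lra.
    - assert (Ht0 : t <> 0) by lra.
      rewrite (@RInt_ext C_R_CompleteNormedModule _ (fun th => Cmult (Cinv (Cmult Ci (RtoC t))) (Cmult (Cmult Ci (circ t th)) (K' (circ t th))))).
      2: { intros th _. replace (circ t th) with (Cmult (RtoC t) (circ 1 th)) at 2.
           cfield. split. intros E. apply Ht0. injection E; intros; auto. apply Ci_nz.
           unfold circ, RtoC, Cmult; simpl. f_equal; rring. }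
      rewrite RInt_Cmult.
      + rewrite (FTC_circ U K K' t HK). cring. intros th. apply HU; auto.
      + eapply (exRInt_of_cont2 _ (fun u v => Cmult (Cmult Ci (circ u v)) (K' (circ u v))) t).
        intros th _. apply cont2_mult. apply cont2_mult. apply cont2_const. apply cont2_circ_std.
        apply (Hol_cont_circ U K K'); auto.
        intros v; reflexivity. }
  intros H1 H2.
  destruct (Rtotal_order r1 r2) as [Hlt|[Heq|Hgt]].
  - apply (eq_is_derive (fun u => @RInt C_R_CompleteNormedModule (fun th => K (circ u th)) 0 (2*PI))); auto.
    intros t Ht. apply Hder. lra.
  - subst; reflexivity.
  - symmetry. apply (eq_is_derive (fun u => @RInt C_R_CompleteNormedModule (fun th => K (circ u th)) 0 (2*PI))); auto.
    intros t Ht. apply Hder. lra.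
Qed.

Lemma Hol_ext U F F' G G' : Hol U F F' -> (forall z, F z = G z) -> (forall z, F' z = G' z) -> Hol U G G'.
Proof.
  intros [H1 H2] EF EF'. split.
  - intros p t a Hu H. rewrite <- EF'. eapply is_derive_ext. intros s; apply EF. apply H1; auto.
  - intros P x y Hu H. destruct (H2 P x y Hu H) as [[A1 A2] [B1 B2]]. split; split.
    + apply (continuity_2d_pt_ext (fun u v => fst (F (P u v)))); auto. intros; rewrite EF; auto.
    + apply (continuity_2d_pt_ext (fun u v => snd (F (P u v)))); auto. intros; rewrite EF; auto.
    + apply (continuity_2d_pt_ext (fun u v => fst (F' (P u v)))); auto. intros; rewrite EF'; auto.
    + apply (continuity_2d_pt_ext (fun u v => snd (F' (P u v)))); auto. intros; rewrite EF'; auto.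
Qed.

Fixpoint node_der (ys : list C) (z : C) : C :=
  match ys with
  | nil => RtoC 0
  | y :: ys' => Cplus (node_poly ys' z) (Cmult (Cminus z y) (node_der ys' z))
  end.

Lemma Hol_node U ys : Hol U (node_poly ys) (node_der ys).
Proof.
  induction ys as [|y ys IH]; simpl.
  - apply Hol_const.
  - eapply Hol_ext. apply (Hol_mult U (fun z => Cminus z y) (fun _ => Cplus (RtoC 1) (RtoC 0))).
    + apply Hol_plus. apply Hol_id. apply Hol_const.
    + exact IH.
    + intros z; reflexivity.
    + intros z. simpl. cring.
Qed.

Lemma node_nz ys z : (forall y, In y ys -> z <> y) -> node_poly ys z <> RtoC 0.
Proof.
  induction ys as [|y ys IH]; simpl; intros H.
  - apply C1_nz.
  - apply Cmult_neq_0. apply Cminus_eq_contra. apply H; auto. apply IH. intros; apply H; auto.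
Qed.

Lemma node_app ys y z : node_poly (ys ++ y :: nil) z = Cmult (node_poly ys z) (Cminus z y).
Proof.
  induction ys as [|a ys IH]; simpl. cring. rewrite IH. cring.
Qed.

Definition msum (ys : list C) : R := fold_right (fun y acc => Cmod y + acc) 0 ys.

Lemma msum_ge ys y : In y ys -> Cmod y <= msum ys.
Proof.
  induction ys as [|a ys IH]; simpl. tauto.
  assert (0 <= msum ys).
  { clear. induction ys; simpl. lra. assert (0 <= Cmod a) by apply Cmod_ge_0. lra. }
  intros [->|Hin]. lra. assert (0 <= Cmod a) by apply Cmod_ge_0. specialize (IH Hin). lra.
Qed.

Lemma msum_nonneg ys : 0 <= msum ys.
Proof. induction ys; simpl. lra. assert (0 <= Cmod a) by apply Cmod_ge_0. lra. Qed.

Lemma msum_app ys y : msum (ys ++ y :: nil) = msum ys + Cmod y.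
Proof. induction ys as [|a ys IH]; simpl. lra. rewrite IH. lra. Qed.

Lemma dd_radius_msum ys : dd_radius ys = 1 + msum ys.
Proof. reflexivity. Qed.

Lemma Cmod_circ r th : 0 <= r -> Cmod (circ r th) = r.
Proof.
  intros Hr. unfold Cmod, circ; cbn [fst snd].
  replace ((r * cos th) ^ 2 + (r * sin th) ^ 2) with (r ^ 2).
  apply sqrt_pow2; auto.
  replace ((r * cos th) ^ 2 + (r * sin th) ^ 2) with (r^2 * (sin th ^ 2 + cos th ^ 2)) by ring.
  rewrite <- !Rsqr_pow2, sin2_cos2. rewrite Rsqr_pow2. ring.
Qed.

Lemma circ_notin ys r th : msum ys < r -> forall y, In y ys -> circ r th <> y.
Proof.
  intros Hr y Hy E. assert (H := msum_ge ys y Hy). rewrite <- E in H.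
  rewrite Cmod_circ in H. lra. assert (0 <= msum ys) by apply msum_nonneg. lra.
Qed.

Lemma fold_shift (h : C -> C) l c :
  fold_right (fun y acc => Cplus (h y) acc) c l = Cplus (fold_right (fun y acc => Cplus (h y) acc) (RtoC 0) l) c.
Proof. induction l; simpl. cring. rewrite IHl. cring. Qed.

Lemma sum_n_list (h : C -> C) (x : nat -> C) q :
  @sum_n C_AbelianMonoid (fun j => h (x j)) q = fold_right (fun y acc => Cplus (h y) acc) (RtoC 0) (map x (seq 0 (S q))).
Proof.
  induction q as [|q IH].
  - rewrite sum_O. simpl. cring.
  - rewrite sum_Sn, IH. rewrite (seq_S (S q)). rewrite map_app, fold_right_app. simpl.
    rewrite (fold_shift h _ (Cplus (h (x (S q))) (RtoC 0))). simpl. unfold plus. simpl. cring.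
Qed.

Lemma inv_sum_node ys z : (forall y, In y ys -> z <> y) ->
  fold_right (fun y acc => Cplus (Cinv (Cminus z y)) acc) (RtoC 0) ys =
  Cdiv (node_der ys z) (node_poly ys z).
Proof.
  induction ys as [|y ys IH]; simpl; intros H.
  - unfold Cdiv. rewrite Cmult_0_l. reflexivity.
  - rewrite IH by (intros; apply H; auto).
    assert (H1 : Cminus z y <> RtoC 0) by (apply Cminus_eq_contra; apply H; auto).
    assert (H2 : node_poly ys z <> RtoC 0) by (apply node_nz; intros; apply H; auto).
    cfield. auto.
Qed.

Definition gfun (L : list C) (s : R) (z : C) : C :=
  Cdiv (Cmult (cexp (Cmult (RtoC s) z)) z) (node_poly L z).

Lemma Hol_g (U : C -> Prop) L s : (forall z, U z -> forall y, In y L -> z <> y) ->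
  exists G', Hol U (gfun L s) G'.
Proof.
  intros HU. eexists. eapply Hol_ext.
  - apply Hol_mult. apply Hol_mult.
    apply (Hol_comp U (fun _ => True)). apply Hol_mult. apply Hol_const. apply Hol_id.
    apply Hol_cexp. auto. apply Hol_id.
    apply Hol_inv. apply Hol_node. intros z Hz. apply node_nz. apply HU; auto.
  - intros z. reflexivity.
  - intros z. reflexivity.
Qed.

Lemma cdr_tau (g N : C) s :
  cdr (fun u => Cdiv (Cmult (cexp (Cmult (RtoC (-u)) g)) g) N) s
      (Cdiv (Cmult (Cmult (Copp g) (cexp (Cmult (RtoC (-s)) g))) g) N).
Proof.
  unfold Cdiv. eapply cdr_val.
  apply (cdr_mult (fun u => Cmult (cexp (Cmult (RtoC (-u)) g)) g) (fun _ => Cinv N)).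
  apply (cdr_mult (fun u => cexp (Cmult (RtoC (-u)) g)) (fun _ => g)).
  apply cdr_cexp. apply (cdr_mult (fun u => RtoC (-u)) (fun _ => g)).
  apply cdr_RtoC. apply rd_opp, rd_id. apply cdr_const. apply cdr_const. apply cdr_const.
  cbv beta. rewrite (RtoC_opp 1). cring.
Qed.

Lemma cont2_node L P x y : cont2 P x y -> (forall w, In w L -> P x y <> w) ->
  cont2 (fun u v => node_poly L (P u v)) x y.
Proof.
  intros H Hn. apply (proj2 (Hol_node (fun z => forall w, In w L -> z <> w) L) P x y Hn H).
Qed.

Lemma cont2_circ_r (r : R) x y : cont2 (fun u v => circ r v) x y.
Proof.
  apply (cont2_circ (fun _ _ => r) (fun u v => v)). apply continuity_2d_pt_const. apply continuity_2d_pt_id2.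
Qed.

Lemma cont2_g L r x y : (forall w, In w L -> circ r y <> w) ->
  cont2 (fun u v => Cdiv (Cmult (cexp (Cmult (RtoC (-u)) (circ r v))) (circ r v)) (node_poly L (circ r v))) x y.
Proof.
  intros Hn. unfold Cdiv. apply cont2_mult. apply cont2_mult. apply cont2_cexp. apply cont2_mult.
  apply cont2_RtoC. apply continuity_2d_pt_opp, continuity_2d_pt_id1. apply cont2_circ_r. apply cont2_circ_r.
  apply cont2_inv. apply (cont2_node L (fun u v => circ r v)). apply cont2_circ_r. auto.
  apply node_nz. auto.
Qed.

Lemma cont2_dg L r x y : (forall w, In w L -> circ r y <> w) ->
  cont2 (fun u v => Cdiv (Cmult (Cmult (Copp (circ r v)) (cexp (Cmult (RtoC (-u)) (circ r v)))) (circ r v)) (node_poly L (circ r v))) x y.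
Proof.
  intros Hn. unfold Cdiv. apply cont2_mult. apply cont2_mult. apply cont2_mult. apply cont2_opp, cont2_circ_r.
  apply cont2_cexp. apply cont2_mult.
  apply cont2_RtoC. apply continuity_2d_pt_opp, continuity_2d_pt_id1. apply cont2_circ_r. apply cont2_circ_r.
  apply cont2_inv. apply (cont2_node L (fun u v => circ r v)). apply cont2_circ_r. auto.
  apply node_nz. auto.
Qed.

Lemma deriv_F L r tau : (forall th w, In w L -> circ r th <> w) ->
  cdr (fun s => Cmult (RtoC (/ (2 * PI))) (@RInt C_R_CompleteNormedModule
         (fun th => Cdiv (Cmult (cexp (Cmult (RtoC (-s)) (circ r th))) (circ r th)) (node_poly L (circ r th))) 0 (2*PI)))
    tau
    (Cmult (RtoC (/ (2 * PI))) (@RInt C_R_CompleteNormedModule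
         (fun th => Cdiv (Cmult (Cmult (Copp (circ r th)) (cexp (Cmult (RtoC (-tau)) (circ r th)))) (circ r th)) (node_poly L (circ r th))) 0 (2*PI))).
Proof.
  intros Hn. eapply cdr_val.
  apply (cdr_mult (fun _ => RtoC (/ (2 * PI)))). apply cdr_const.
  apply (param_C (fun u th => Cdiv (Cmult (cexp (Cmult (RtoC (-u)) (circ r th))) (circ r th)) (node_poly L (circ r th)))
                 (fun u th => Cdiv (Cmult (Cmult (Copp (circ r th)) (cexp (Cmult (RtoC (-u)) (circ r th)))) (circ r th)) (node_poly L (circ r th)))
                 0 (2*PI) tau 1).
  - lra.
  - intros u th _. apply cdr_tau.
  - intros th _. apply cont2_dg. auto.
  - intros u th _ _. apply cont2_g. auto.
  - cring.
Qed.

Lemma plusCM (a b : C) : @plus C_AbelianMonoid a b = Cplus a b.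
Proof. reflexivity. Qed.
Lemma plusCR (a b : C) : @plus C_R_NormedModule a b = Cplus a b.
Proof. reflexivity. Qed.

Lemma sumSC (a : nat -> C) n : @sum_n C_AbelianMonoid a (S n) = Cplus (@sum_n C_AbelianMonoid a n) (a (S n)).
Proof. exact (sum_Sn a n). Qed.

Lemma is_RInt_Cplus (f g : R -> C) a b If Ig :
  @is_RInt C_R_NormedModule f a b If -> @is_RInt C_R_NormedModule g a b Ig ->
  @is_RInt C_R_NormedModule (fun t => Cplus (f t) (g t)) a b (Cplus If Ig).
Proof. intros H1 H2. exact (@is_RInt_plus C_R_NormedModule f g a b If Ig H1 H2). Qed.

Lemma sum_mult_l (c : C) (a : nat -> C) q :
  @sum_n C_AbelianMonoid (fun j => Cmult c (a j)) q = Cmult c (@sum_n C_AbelianMonoid a q).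
Proof.
  induction q as [|q IH].
  - rewrite !sum_O. reflexivity.
  - rewrite !sumSC, IH. cring.
Qed.

Lemma sum_is_RInt (a : nat -> C) (h : nat -> R -> C) (l : nat -> C) q lo hi :
  (forall j, (j <= q)%nat -> @is_RInt C_R_NormedModule (h j) lo hi (l j)) ->
  @is_RInt C_R_NormedModule (fun th => @sum_n C_AbelianMonoid (fun j => Cmult (a j) (h j th)) q) lo hi
     (@sum_n C_AbelianMonoid (fun j => Cmult (a j) (l j)) q).
Proof.
  induction q as [|q IH]; intros H.
  - rewrite sum_O. apply (@is_RInt_ext C_R_NormedModule (fun th => Cmult (a O) (h O th))). intros th _. rewrite sum_O. reflexivity.
    apply (is_RInt_Cmult (a O) (h O)). apply H. lia.
  - rewrite sumSC. apply (@is_RInt_ext C_R_NormedModule (fun th => Cplus (@sum_n C_AbelianMonoid (fun j => Cmult (a j) (h j th)) q) (Cmult (a (S q)) (h (S q) th)))). intros th _. rewrite sumSC. reflexivity.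
    apply is_RInt_Cplus.
    apply IH. intros j Hj. apply H. lia.
    apply (is_RInt_Cmult (a (S q)) (h (S q))). apply H. lia.
Qed.

Lemma sum_frac (x : nat -> C) (z : C) q :
  (forall j, (j <= q)%nat -> Cminus z (x j) <> RtoC 0) ->
  @sum_n C_AbelianMonoid (fun j => Cmult (x j) (Cinv (Cminus z (x j)))) q =
  Cminus (Cmult z (@sum_n C_AbelianMonoid (fun j => Cinv (Cminus z (x j))) q)) (RtoC (INR (S q))).
Proof.
  induction q as [|q IH]; intros H.
  - rewrite !sum_O. simpl INR. assert (H0 := H O (le_n _)). cfield. auto.
  - rewrite !sumSC, IH by (intros; apply H; lia).
    assert (H0 := H (S q) (le_n _)).
    rewrite (S_INR (S q)), RtoC_plus. cfield. auto.
Qed.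

Definition KD (L : list C) (tau : R) (z : C) : C :=
  Cmult Ci (Cplus (Cmult (Cplus (Cmult (RtoC (-tau)) (Cmult (cexp (Cmult (RtoC (-tau)) z)) z)) (cexp (Cmult (RtoC (-tau)) z)))
                         (Cinv (node_poly L z)))
                  (Cmult (Cmult (cexp (Cmult (RtoC (-tau)) z)) z)
                         (Copp (Cmult (node_der L z) (Cinv (Cmult (node_poly L z) (node_poly L z))))))).

Lemma Hol_K (U : C -> Prop) L tau : (forall z, U z -> forall y, In y L -> z <> y) ->
  Hol U (fun z => Cmult Ci (Cmult (Cmult (cexp (Cmult (RtoC (-tau)) z)) z) (Cinv (node_poly L z)))) (KD L tau).
Proof.
  intros HU. eapply Hol_ext.
  - apply Hol_mult. apply Hol_const. apply Hol_mult. apply Hol_mult.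
    apply (Hol_comp U (fun _ => True)). apply Hol_mult. apply Hol_const. apply Hol_id.
    apply Hol_cexp. auto. apply Hol_id.
    apply Hol_inv. apply Hol_node. intros z Hz. apply node_nz. apply HU; auto.
  - intros z. reflexivity.
  - intros z. unfold KD. cring.
Qed.

Lemma Ci2 (a b : C) : Cmult (Cmult Ci a) (Cmult Ci b) = Copp (Cmult a b).
Proof. destruct a, b. unfold Ci, Cmult, Copp; simpl. f_equal; ring. Qed.

Lemma pointwise (x : nat -> C) q tau z :
  (forall y, In y (map x (seq 0 (S q))) -> z <> y) ->
  Cplus (Cplus (@sum_n C_AbelianMonoid (fun j => Cmult (x j) (gfun (map x (seq 0 (S q)) ++ x j :: nil) (-tau) z)) q)
               (Cmult (RtoC (-tau)) (Cdiv (Cmult (Cmult (Copp z) (cexp (Cmult (RtoC (-tau)) z))) z) (node_poly (map x (seq 0 (S q))) z))))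
        (Cmult (RtoC (INR q)) (Cdiv (Cmult (cexp (Cmult (RtoC (-tau)) z)) z) (node_poly (map x (seq 0 (S q))) z)))
  = Cmult (Cmult Ci z) (KD (map x (seq 0 (S q))) tau z).
Proof.
  set (ys := map x (seq 0 (S q))). intros HU.
  assert (Hin : forall j, (j <= q)%nat -> In (x j) ys) by (intros; apply in_map, in_seq; lia).
  assert (HP : node_poly ys z <> RtoC 0) by (apply node_nz; auto).
  assert (Hzx : forall j, (j <= q)%nat -> Cminus z (x j) <> RtoC 0).
  { intros j Hj. apply Cminus_eq_contra. apply HU. apply Hin; auto. }
  set (E := cexp (Cmult (RtoC (-tau)) z)).
  rewrite (sum_n_ext_loc _ (fun j => Cmult (Cmult (Cmult E z) (Cinv (node_poly ys z))) (Cmult (x j) (Cinv (Cminus z (x j)))))).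
  2: { intros j Hj. unfold gfun. rewrite node_app. fold E. specialize (Hzx j Hj). cfield. auto. }
  rewrite sum_mult_l, sum_frac by auto.
  rewrite (sum_n_list (fun y => Cinv (Cminus z y)) x q). fold ys.
  rewrite inv_sum_node by auto.
  unfold KD. fold E. rewrite Ci2.
  rewrite S_INR, RtoC_plus.
  cfield. auto.
Qed.

Theorem lemma2 (q : nat) (x : nat -> C) (tau : R) :
  exists D : C,
    @is_derive R_AbsRing C_R_NormedModule
      (fun s : R => exp_dd (- s) (map x (seq 0 (S q)))) tau D /\
    sum_n (fun j => Cmult (x j) (exp_dd (- tau) (map x (seq 0 (S q)) ++ x j :: nil))) q
    = Cminus (Cmult (RtoC tau) D)
             (Cmult (RtoC (INR q)) (exp_dd (- tau) (map x (seq 0 (S q))))).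
Proof.
  set (ys := map x (seq 0 (S q))).
  set (m := msum ys).
  assert (Hm : 0 <= m) by apply msum_nonneg.
  set (r0 := dd_radius ys).
  assert (Hr0 : r0 = 1 + m) by reflexivity.
  set (U := fun z => forall y, In y ys -> z <> y).
  assert (HU : forall r th, m < r -> U (circ r th)) by (intros r th Hr y Hy; apply (circ_notin ys r th); auto).
  assert (HU0 : forall th, U (circ r0 th)) by (intros; apply HU; lra).
  assert (Hin : forall j, (j <= q)%nat -> In (x j) ys) by (intros; apply in_map, in_seq; lia).
  set (c := RtoC (/ (2*PI))).
  set (f0 := fun th => Cdiv (Cmult (cexp (Cmult (RtoC (- tau)) (circ r0 th))) (circ r0 th)) (node_poly ys (circ r0 th))).
  set (dg := fun th => Cdiv (Cmult (Cmult (Copp (circ r0 th)) (cexp (Cmult (RtoC (-tau)) (circ r0 th)))) (circ r0 th)) (node_poly ys (circ r0 th))).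
  set (ID := @RInt C_R_CompleteNormedModule dg 0 (2*PI)).
  set (IF := @RInt C_R_CompleteNormedModule f0 0 (2*PI)).
  exists (Cmult c ID).
  split.
  { unfold exp_dd, divdiff. cbv zeta. fold r0. apply (deriv_F ys r0 tau). intros th w Hw. apply HU0; auto. }
  set (I := fun j => @RInt C_R_CompleteNormedModule (fun th => gfun (ys ++ x j :: nil) (-tau) (circ r0 th)) 0 (2*PI)).
  assert (HUL : forall j, (j <= q)%nat -> forall z, U z -> forall y, In y (ys ++ x j :: nil) -> z <> y).
  { intros j Hj z Hz y Hy. apply in_app_or in Hy. destruct Hy as [Hy|[Hy|[]]]. apply Hz; auto. subst y. apply Hz, Hin; auto. }
  rewrite (sum_n_ext_loc _ (fun j => Cmult (x j) (Cmult c (I j)))).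
  2: { intros j Hj. f_equal. unfold exp_dd, divdiff. cbv zeta. fold c. f_equal.
       destruct (Hol_g U (ys ++ x j :: nil) (-tau) (HUL j Hj)) as [G' HG].
       apply (radius_indep U (gfun (ys ++ x j :: nil) (-tau)) G' m (dd_radius (ys ++ x j :: nil)) r0); auto.
       unfold dd_radius. fold (msum (ys ++ x j :: nil)). rewrite msum_app.
       assert (0 <= Cmod (x j)) by apply Cmod_ge_0. fold m. lra.
       lra. }
  rewrite (sum_n_ext _ (fun j => Cmult c (Cmult (x j) (I j)))) by (intros; cring).
  rewrite sum_mult_l.
  assert (Hexp : exp_dd (- tau) ys = Cmult c IF) by reflexivity.
  rewrite Hexp.
  assert (exF : @ex_RInt C_R_NormedModule f0 0 (2*PI)).
  { apply (exRInt_of_cont2 _ (fun u v => Cdiv (Cmult (cexp (Cmult (RtoC (-u)) (circ r0 v))) (circ r0 v)) (node_poly ys (circ r0 v))) tau).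
    intros th _. apply cont2_g. apply HU0. intros v; reflexivity. }
  assert (exD : @ex_RInt C_R_NormedModule dg 0 (2*PI)).
  { apply (exRInt_of_cont2 _ (fun u v => Cdiv (Cmult (Cmult (Copp (circ r0 v)) (cexp (Cmult (RtoC (-u)) (circ r0 v)))) (circ r0 v)) (node_poly ys (circ r0 v))) tau).
    intros th _. apply cont2_dg. apply HU0. intros v; reflexivity. }
  assert (exG : forall j, (j <= q)%nat -> @is_RInt C_R_NormedModule (fun th => gfun (ys ++ x j :: nil) (-tau) (circ r0 th)) 0 (2*PI) (I j)).
  { intros j Hj. apply (@RInt_correct C_R_CompleteNormedModule).
    apply (exRInt_of_cont2 _ (fun u v => Cdiv (Cmult (cexp (Cmult (RtoC (-u)) (circ r0 v))) (circ r0 v)) (node_poly (ys ++ x j :: nil) (circ r0 v))) tau).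
    intros th _. apply cont2_g. apply (HUL j Hj). apply HU0. intros v; reflexivity. }
  assert (HS := sum_is_RInt x (fun j th => gfun (ys ++ x j :: nil) (-tau) (circ r0 th)) I q 0 (2*PI) exG).
  assert (HD := is_RInt_Cmult (RtoC (-tau)) dg 0 (2*PI) ID (@RInt_correct C_R_CompleteNormedModule dg 0 (2*PI) exD)).
  assert (HF := is_RInt_Cmult (RtoC (INR q)) f0 0 (2*PI) IF (@RInt_correct C_R_CompleteNormedModule f0 0 (2*PI) exF)).
  assert (Hall := is_RInt_Cplus _ _ _ _ _ _ (is_RInt_Cplus _ _ _ _ _ _ HS HD) HF).
  assert (HK := Hol_K U ys tau (fun z Hz => Hz)).
  assert (Hftc := FTC_circ U _ _ r0 HK HU0).
  assert (Hall' : @is_RInt C_R_NormedModule (fun th => Cmult (Cmult Ci (circ r0 th)) (KD ys tau (circ r0 th))) 0 (2*PI)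
     (Cplus (Cplus (@sum_n C_AbelianMonoid (fun j => Cmult (x j) (I j)) q) (Cmult (RtoC (-tau)) ID)) (Cmult (RtoC (INR q)) IF))).
  { eapply is_RInt_ext. 2: exact Hall. intros th _. simpl. apply pointwise. apply HU0. }
  apply (@is_RInt_unique C_R_CompleteNormedModule) in Hall'.
  rewrite Hftc in Hall'.
  rewrite RtoC_opp in Hall'.
  assert (E0 : @sum_n C_AbelianMonoid (fun j => Cmult (x j) (I j)) q = Cminus (Cmult (RtoC tau) ID) (Cmult (RtoC (INR q)) IF)).
  { match type of Hall' with _ = ?V => replace (@sum_n C_AbelianMonoid (fun j => Cmult (x j) (I j)) q) with (Cplus V (Cminus (Cmult (RtoC tau) ID) (Cmult (RtoC (INR q)) IF))) by cring end.
    rewrite <- Hall'. cring. }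
  rewrite E0. cring.
Qed.
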